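(* Let $\lambda>0$ and $K(\sigma,\tau)=\exp(-\lambda d(\sigma,\tau))$ (Mallows kernel) on $S_n$. Let $R_i,R_j\subseteq S_n$ be top-$k$ partial rankings and $N,M\ge1$. Let $(\sigma_n)_{n=1}^N$ be i.i.d. uniform on $R_i$ and $(\tau_m)_{m=1}^M$ i.i.d. uniform on $R_j$, independent of each other. Consider two cases: (antithetic) $\widetilde\sigma_n=A_{R_i}(\sigma_n)$ and $\widetilde\tau_m=A_{R_j}(\tau_m)$; (i.i.d.) $(\widetilde\sigma_n)_{n=1}^N$ i.i.d. uniform on $R_i$ and $(\widetilde\tau_m)_{m=1}^M$ i.i.d. uniform on $R_j$, all independent of each other and of the $\sigma_n,\tau_m$. Let $$\widehat K(R_i,R_j)=\frac1{4NM}\sum_{n=1}^N\sum_{m=1}^M\big(K(\sigma_n,\tau_m)+K(\widetilde\sigma_n,\tau_m)+K(\sigma_n,\widetilde\tau_m)+K(\widetilde\sigma_n,\widetilde\tau_m)\big),$$ and let $V_{\mathrm{anti}}(N,M)$ and $V_{\mathrm{iid}}(N,M)$ denote its variance in the two cases. Then the estimator has the same mean in both cases, and there is a constant $C$ independent of $N,M$ such that $V_{\mathrm{anti}}(N,M)\le V_{\mathrm{iid}}(N,M)+C/(NM)$ for all $N,M$; i.e. the leading-order (order $1/N$ and $1/M$) part of the variance is no larger in the antithetic case.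
   Context: $S_n$ is the symmetric group on $[n]$; $\sigma\in S_n$ is identified with the full ranking $\sigma(1)\succ\cdots\succ\sigma(n)$. For distinct items $x,y$, $\{x,y\}$ is discordant for $\sigma,\tau$ if $(\sigma^{-1}(x)-\sigma^{-1}(y))(\tau^{-1}(x)-\tau^{-1}(y))<0$. The Kendall distance $d(\sigma,\tau)$ is the number of unordered discordant pairs. For $0\le k\le n$ and distinct $a_1,\dots,a_k\in[n]$, the top-$k$ partial ranking is the set $R=\{\sigma\in S_n:\sigma(i)=a_i,\ i\le k\}$ (different $R$'s may have different $k$). The antithetic operator $A_R:R\to R$ is $A_R(\sigma)(i)=a_i$ for $i\le k$ and $A_R(\sigma)(k+j)=\sigma(n+1-j)$ for $j=1,\dots,n-k$. *)

(* Defs.v *)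
From HB Require Import structures.
From mathcomp Require Import all_boot all_order all_algebra all_fingroup.
From Stdlib Require Import Lia.
Set Implicit Arguments. Unset Strict Implicit. Unset Printing Implicit Defensive.
Import Order.TTheory GRing.Theory Num.Theory.

(* Items and positions are 0-indexed: [n] is 'I_n, and a permutation
   s : 'S_n is the ranking s 0 > s 1 > ... > s (n-1); s^-1 x is the position of x. *)

Definition kendall n (s t : 'S_n) : nat :=
  #|[set p : 'I_n * 'I_n | (p.1 < p.2)%N &&
      (((s^-1)%g p.1 < (s^-1)%g p.2)%N != (((t^-1)%g p.1 < (t^-1)%g p.2)%N))]|.

(* Mallows kernel exp(-lambda d) written as q ^ d with q = exp(-lambda) in (0,1). *)
Definition mallows (R : rcfType) (q : R) n (s t : 'S_n) : R := q ^+ kendall s t.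

(* Top-k partial ranking determined by the distinct items a = [a_1;...;a_k]. *)
Definition topk n (a : seq 'I_n) : {set 'S_n} :=
  [set s : 'S_n | [forall i : 'I_n, (i < size a)%N ==> (s i == nth i a i)]].

(* Position map of the antithetic operator (0-indexed):
   p < k -> p,  k <= p < n -> k + n - 1 - p (reversal of the tail). *)
Definition anti_idx (k n p : nat) : nat := if (p < k)%N then p else ((k + n).-1 - p)%N.

Lemma anti_idx_lt k n p : (p < n)%N -> (anti_idx k n p < n)%N.
Proof.
rewrite /anti_idx; case: ifP => // /negbT; rewrite -leqNgt => hkp hpn.
move/ssrnat.leP: hkp => hkp; move/ssrnat.leP: hpn => hpn; apply/ssrnat.leP.
rewrite -subn1 -!minusE -plusE; lia.
Qed.

Lemma anti_idx_invol k n p : (p < n)%N -> anti_idx k n (anti_idx k n p) = p.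
Proof.
rewrite /anti_idx; case: (ltnP p k) => hpk hpn; first by rewrite hpk.
have -> : ((k + n).-1 - p < k)%N = false.
  apply/negbTE; rewrite -leqNgt.
  move/ssrnat.leP: hpk => hpk; move/ssrnat.leP: hpn => hpn; apply/ssrnat.leP.
  rewrite -subn1 -!minusE -plusE; lia.
move/ssrnat.leP: hpk => hpk; move/ssrnat.leP: hpn => hpn.
rewrite -subn1 -!minusE -plusE; lia.
Qed.

Definition anti_fun k n (i : 'I_n) : 'I_n := Ordinal (anti_idx_lt k (ltn_ord i)).

Lemma anti_fun_inj k n : injective (@anti_fun k n).
Proof.
apply: (@can_inj _ _ _ (@anti_fun k n)) => i; apply: val_inj => /=.
exact: anti_idx_invol.
Qed.

Definition anti_perm k n : 'S_n := perm (@anti_fun_inj k n).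

(* Antithetic operator A_R for R = topk a:  A(s)(p) = s (anti_idx k n p).
   For s in R this is a_p for p < k and s(n-1+k-p) otherwise. *)
Definition antithetic n (a : seq 'I_n) (s : 'S_n) : 'S_n :=
  (anti_perm (size a) n * s)%g.

(* Samples: functions 'I_N -> 'S_n with all values in A (uniform i.i.d. = uniform on this set). *)
Definition samples n N (A : {set 'S_n}) : {set {ffun 'I_N -> 'S_n}} :=
  [set f : {ffun 'I_N -> 'S_n} | [forall i, f i \in A]].

Definition avg (R : rcfType) (T : finType) (A : {set T}) (X : T -> R) : R :=
  ((\sum_(w in A) X w) / #|A|%:R)%R.
Definition variance (R : rcfType) (T : finType) (A : {set T}) (X : T -> R) : R :=
  avg A (fun w => (X w - avg A X) ^+ 2)%R.

Definition estimator (R : rcfType) (q : R) n N M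
    (s st : {ffun 'I_N -> 'S_n}) (t tt : {ffun 'I_M -> 'S_n}) : R :=
  ((4 * N * M)%:R^-1 * \sum_(i < N) \sum_(j < M)
     (mallows q (s i) (t j) + mallows q (st i) (t j)
      + mallows q (s i) (tt j) + mallows q (st i) (tt j)))%R.

(* Antithetic case: sample space (sigma, tau); tilde variables are A(sigma_n), A(tau_m). *)
Definition Omega_anti n (a b : seq 'I_n) N M :=
  setX (samples N (topk a)) (samples M (topk b)).
Definition X_anti (R : rcfType) (q : R) n (a b : seq 'I_n) N M
    (w : {ffun 'I_N -> 'S_n} * {ffun 'I_M -> 'S_n}) : R :=
  estimator q w.1 [ffun i => antithetic a (w.1 i)] w.2 [ffun j => antithetic b (w.2 j)].

(* I.i.d. case: sample space ((sigma, sigma~), (tau, tau~)), all independent uniform. *)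
Definition Omega_iid n (a b : seq 'I_n) N M :=
  setX (setX (samples N (topk a)) (samples N (topk a)))
       (setX (samples M (topk b)) (samples M (topk b))).
Definition X_iid (R : rcfType) (q : R) n N M
    (w : ({ffun 'I_N -> 'S_n} * {ffun 'I_N -> 'S_n}) *
         ({ffun 'I_M -> 'S_n} * {ffun 'I_M -> 'S_n})) : R :=
  estimator q w.1.1 w.1.2 w.2.1 w.2.2.

Definition mean_anti (R : rcfType) (q : R) n (a b : seq 'I_n) N M : R :=
  avg (Omega_anti a b N M) (X_anti q a b (N:=N) (M:=M)).
Definition mean_iid (R : rcfType) (q : R) n (a b : seq 'I_n) N M : R :=
  avg (Omega_iid a b N M) (@X_iid R q n N M).
Definition V_anti (R : rcfType) (q : R) n (a b : seq 'I_n) N M : R :=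
  variance (Omega_anti a b N M) (X_anti q a b (N:=N) (M:=M)).
Definition V_iid (R : rcfType) (q : R) n (a b : seq 'I_n) N M : R :=
  variance (Omega_iid a b N M) (@X_iid R q n N M).

(* Main.v *)
Require Import Defs.
From HB Require Import structures.
From mathcomp Require Import all_boot all_order all_algebra all_fingroup.
From mathcomp Require Import ring lra zify.
Import Order.TTheory GRing.Theory Num.Theory.
Set Implicit Arguments. Unset Strict Implicit. Unset Printing Implicit Defensive.

Section Avg.
Local Open Scope ring_scope.
Variable R : rcfType.

Lemma avgD (T : finType) (A : {set T}) (X Y : T -> R) :
  avg A (fun w => X w + Y w) = avg A X + avg A Y.
Proof. by rewrite /avg big_split /= mulrDl. Qed.

Lemma avgZ (T : finType) (A : {set T}) (c : R) (X : T -> R) :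
  avg A (fun w => c * X w) = c * avg A X.
Proof. by rewrite /avg -mulr_sumr mulrA. Qed.

Lemma avgZr (T : finType) (A : {set T}) (c : R) (X : T -> R) :
  avg A (fun w => X w * c) = avg A X * c.
Proof. by rewrite /avg -mulr_suml mulrAC. Qed.

Lemma avg_sum (T : finType) (A : {set T}) (I : Type) (r : seq I) (F : I -> T -> R) :
  avg A (fun w => \sum_(i <- r) F i w) = \sum_(i <- r) avg A (F i).
Proof. by rewrite /avg exchange_big /= mulr_suml. Qed.

Lemma avg_ext (T : finType) (A : {set T}) (X Y : T -> R) :
  {in A, X =1 Y} -> avg A X = avg A Y.
Proof. by move=> h; rewrite /avg (eq_bigr Y). Qed.

Lemma avg_cst (T : finType) (A : {set T}) (c : R) :
  (0 < #|A|)%N -> avg A (fun _ => c) = c.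
Proof.
move=> h; rewrite /avg sumr_const -[c *+ _]mulr_natr mulfK //.
by rewrite pnatr_eq0 -lt0n.
Qed.

Lemma avg_card0 (T : finType) (A : {set T}) (X : T -> R) :
  #|A| = 0%N -> avg A X = 0.
Proof. by move=> h; rewrite /avg h invr0 mulr0. Qed.

Lemma avg_setX (T1 T2 : finType) (A : {set T1}) (B : {set T2}) (F : T1 * T2 -> R) :
  avg (setX A B) F = avg A (fun x => avg B (fun y => F (x, y))).
Proof.
rewrite /avg -mulr_suml -mulrA -invfM cardsX mulnC natrM; congr (_ * _).
rewrite pair_big /=; apply: eq_big => [[x y]|[x y] _] /=.
  by rewrite in_setX.
by [].
Qed.

Lemma avg_exchange (T1 T2 : finType) (A : {set T1}) (B : {set T2}) (F : T1 -> T2 -> R) :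
  avg A (fun x => avg B (fun y => F x y)) = avg B (fun y => avg A (fun x => F x y)).
Proof.
rewrite /avg -!mulr_suml -!mulrA -!invfM [(#|B|%:R * _)]mulrC.
by rewrite exchange_big.
Qed.

Lemma var_alt (T : finType) (A : {set T}) (X : T -> R) :
  (0 < #|A|)%N -> variance A X = avg A (fun w => X w ^+ 2) - avg A X ^+ 2.
Proof.
move=> h; rewrite /variance.
have -> : avg A (fun w => (X w - avg A X) ^+ 2) =
  avg A (fun w => X w ^+ 2 + ((- (2 * avg A X)) * X w + avg A X ^+ 2)).
  by apply: avg_ext => w _; ring.
rewrite avgD avgD avgZ avg_cst //; ring.
Qed.

Lemma avg_cov (T : finType) (A : {set T}) (g1 g2 : T -> R) :
  {in A &, forall x y, (g1 x - g1 y) * (g2 x - g2 y) <= 0} ->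
  avg A (fun x => g1 x * g2 x) <= avg A g1 * avg A g2.
Proof.
move=> h.
have H0 : \sum_(x in A) \sum_(y in A) (g1 x - g1 y) * (g2 x - g2 y) <= 0.
  rewrite -oppr_ge0 -sumrN; apply: sumr_ge0 => x xA.
  rewrite -sumrN; apply: sumr_ge0 => y yA; rewrite oppr_ge0; exact: h.
have E : \sum_(x in A) \sum_(y in A) (g1 x - g1 y) * (g2 x - g2 y) =
   2 * (#|A|%:R * \sum_(x in A) g1 x * g2 x - (\sum_(x in A) g1 x) * (\sum_(x in A) g2 x)).
  rewrite (eq_bigr (fun x => #|A|%:R * (g1 x * g2 x) - g1 x * (\sum_(y in A) g2 y)
               - g2 x * (\sum_(y in A) g1 y) + \sum_(y in A) g1 y * g2 y)); last first.
    move=> x _.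
    rewrite (eq_bigr (fun y => g1 x * g2 x + (- (g1 x * g2 y) + (- (g2 x * g1 y) + g1 y * g2 y)))); last by move=> y _; ring.
    rewrite !big_split /= sumr_const !sumrN -!mulr_sumr -mulr_natl; ring.
  rewrite !big_split /= !sumrN sumr_const -!mulr_sumr -!mulr_suml -mulr_natl.
  ring.
case: (posnP #|A|) => hA.
  by rewrite !avg_card0 // mulr0.
rewrite /avg.
have hA' : 0 < #|A|%:R :> R by rewrite ltr0n.
move: H0; rewrite E pmulr_rle0 // subr_le0 => H0.
rewrite mulrACA -invfM ler_pdivrMr ?mulr_gt0 //.
set P := _ * _ / _ * _.
have -> : P = (\sum_(w in A) g1 w) * (\sum_(w in A) g2 w) / #|A|%:R.
  rewrite /P; field; by rewrite pnatr_eq0 -lt0n.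
by rewrite ler_pdivlMr // mulrC.
Qed.
End Avg.

Section Samples.
Local Open Scope ring_scope.
Variable R : rcfType.

Lemma sum_samples_prod (m : nat) (A : {set 'S_m}) N (G : 'I_N -> 'S_m -> R) :
  \sum_(f in samples N A) \prod_i G i (f i) = \prod_i \sum_(x in A) G i x.
Proof.
rewrite (eq_bigr (fun i => \sum_x (if x \in A then G i x else 0))); last first.
  by move=> i _; rewrite big_mkcond.
rewrite bigA_distr_bigA big_mkcond /=; apply: eq_bigr => f _.
case: ifP => hf.
  move: hf; rewrite inE => /forallP hf; apply: eq_bigr => i _; by rewrite hf.
move: hf; rewrite inE => /negbT /forallPn [i hi].
by rewrite (bigD1 i) //= (negbTE hi) mul0r.
Qed.

Lemma card_samples (m : nat) (A : {set 'S_m}) N :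
  (#|samples N A|)%:R = (#|A|%:R) ^+ N :> R.
Proof.
have E1 : (#|samples N A|)%:R = \sum_(f in samples N A) \prod_(i < N) (1 : R).
  by rewrite (eq_bigr (fun _ => 1)) ?sumr_const // => f _; rewrite big1.
rewrite E1; have := sum_samples_prod A (fun _ _ => 1 : R); move=> /= ->.
rewrite (eq_bigr (fun _ => #|A|%:R)) => [|i _]; last by rewrite sumr_const.
by rewrite prodr_const card_ord.
Qed.

Lemma avg_samples_prod (m : nat) (A : {set 'S_m}) N (G : 'I_N -> 'S_m -> R) :
  avg (samples N A) (fun f => \prod_i G i (f i)) = \prod_i avg A (G i).
Proof.
rewrite /avg sum_samples_prod card_samples prodf_div; congr (_ / _).
by rewrite prodr_const card_ord.
Qed.

Lemma samples_law2 (m : nat) (A : {set 'S_m}) N (phi psi : 'S_m -> R) (n n' : 'I_N) :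
  (0 < #|A|)%N ->
  avg (samples N A) (fun f => phi (f n) * psi (f n')) =
  if n == n' then avg A (fun x => phi x * psi x) else avg A phi * avg A psi.
Proof.
move=> hA; case: eqP => [<-|nn'].
  pose G := fun (i : 'I_N) (x : 'S_m) => if i == n then phi x * psi x else 1.
  rewrite (@avg_ext _ _ _ _ (fun f : {ffun 'I_N -> 'S_m} => \prod_i G i (f i))); last first.
    move=> f _; rewrite (bigD1 n) //= /G eqxx big1 ?mulr1 // => i /negbTE -> //.
  rewrite avg_samples_prod (bigD1 n) //= /G eqxx big1 ?mulr1 // => i /negbTE ->.
  exact: avg_cst.
have nn'' : (n' == n) = false by apply/eqP => e; apply: nn'.
pose G := fun (i : 'I_N) (x : 'S_m) => if i == n then phi x else if i == n' then psi x else 1.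
rewrite (@avg_ext _ _ _ _ (fun f : {ffun 'I_N -> 'S_m} => \prod_i G i (f i))); last first.
  move=> f _; rewrite (bigD1 n) //= (bigD1 n') /=; last by rewrite nn''.
  rewrite /G eqxx nn'' eqxx big1 ?mulr1 // => i /andP [/negbTE -> /negbTE ->] //.
rewrite avg_samples_prod (bigD1 n) //= (bigD1 n') /=; last by rewrite nn''.
rewrite /G eqxx nn'' eqxx big1 ?mulr1 // => i /andP [/negbTE -> /negbTE ->].
exact: avg_cst.
Qed.

Definition side_law (T U : finType) N (S : {set T}) (u : 'I_N -> T -> U) (A : {set U}) :=
  [/\ (0 < #|S|)%N, (0 < #|A|)%N &
   forall (phi psi : U -> R) (n n' : 'I_N),
     avg S (fun w => phi (u n w) * psi (u n' w)) =
     if n == n' then avg A (fun x => phi x * psi x) else avg A phi * avg A psi].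

Lemma side1 (T U : finType) N (S : {set T}) (u : 'I_N -> T -> U) (A : {set U}) (phi : U -> R) n :
  side_law S u A -> avg S (fun w => phi (u n w)) = avg A phi.
Proof.
case=> _ _ h; have := h phi (fun _ => 1) n n; rewrite eqxx.
rewrite (@avg_ext _ _ _ (fun w => phi (u n w) * 1) (fun w => phi (u n w))); last by move=> w _; rewrite mulr1.
by rewrite (@avg_ext _ _ _ (fun x => phi x * 1) phi) // => x _; rewrite mulr1.
Qed.

Lemma samples_pos (m : nat) (A : {set 'S_m}) N : (0 < #|A|)%N -> (0 < #|samples N A|)%N.
Proof.
move=> hA; rewrite lt0n; apply/eqP => h0; have := card_samples A N.
rewrite h0 => /eqP; rewrite eq_sym expf_eq0 pnatr_eq0 => /andP [_ /eqP h].
by rewrite h in hA.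
Qed.

Lemma side_samples (m : nat) (A : {set 'S_m}) N :
  (0 < #|A|)%N -> side_law (samples N A) (fun n f => f n) A.
Proof.
move=> hA; split => //; first exact: samples_pos.
move=> phi psi n n'; exact: samples_law2.
Qed.

Lemma side_pairs (m : nat) (A : {set 'S_m}) N :
  (0 < #|A|)%N ->
  side_law (setX (samples N A) (samples N A)) (fun n w => (w.1 n, w.2 n)) (setX A A).
Proof.
move=> hA; split.
- by rewrite cardsX muln_gt0 samples_pos.
- by rewrite cardsX muln_gt0 hA.
move=> phi psi n n'; rewrite avg_setX /=.
case: eqP => [<-|nn'].
  rewrite (@avg_ext _ _ _ _ (fun f : {ffun 'I_N -> 'S_m} => (fun x => avg A (fun y => phi (x, y) * psi (x, y))) (f n))); last first.
    move=> f _; have H := samples_law2 (A:=A) (fun y => phi (f n, y)) (fun y => psi (f n, y)) n n hA.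
    rewrite eqxx in H. exact H.
  apply: etrans (side1 (fun x => avg A (fun y => phi (x, y) * psi (x, y))) n (side_samples N hA)) _.
  by rewrite avg_setX.
rewrite (@avg_ext _ _ _ _ (fun f : {ffun 'I_N -> 'S_m} => (fun x => avg A (fun y => phi (x, y))) (f n) * (fun x => avg A (fun y => psi (x, y))) (f n'))); last first.
  move=> f _; apply: etrans (samples_law2 (A:=A) (fun y => phi (f n, y)) (fun y => psi (f n', y)) n n' hA) _.
  case: eqP => // e; by case: nn'.
apply: etrans (samples_law2 (A:=A) (fun x => avg A (fun y => phi (x, y))) (fun x => avg A (fun y => psi (x, y))) n n' hA) _.
case: eqP => [e|_]; first by case: nn'.
by rewrite !avg_setX.
Qed.
End Samples.

Section VStat.
Local Open Scope ring_scope.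
Variable R : rcfType.

Lemma sum_delta N (i : 'I_N) (c : R) : \sum_(j < N) (if i == j then c else 0) = c.
Proof.
by rewrite (bigD1 i) //= eqxx big1 ?addr0 // => j; rewrite eq_sym => /negbTE ->.
Qed.

Lemma sum_ifeq N (al be : R) :
  \sum_(i < N) \sum_(j < N) (if i == j then al else be) =
  N%:R * al + (N%:R * N%:R - N%:R) * be.
Proof.
have E : forall i : 'I_N, \sum_(j < N) (if i == j then al else be) =
   \sum_(j < N) ((if i == j then al - be else 0) + be).
  by move=> i; apply: eq_bigr => j _; case: ifP => _; ring.
under eq_bigr => i _ do rewrite E big_split /= sum_delta sumr_const card_ord.
rewrite sumr_const card_ord -[(_ + _) *+ N]mulr_natr -[be *+ N]mulr_natr; ring.
Qed.

Variables (T1 T2 U1 U2 : finType) (N M : nat) (S1 : {set T1}) (S2 : {set T2})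
  (u : 'I_N -> T1 -> U1) (v : 'I_M -> T2 -> U2) (A : {set U1}) (B : {set U2})
  (h : U1 -> U2 -> R).
Hypotheses (L1 : @side_law R _ _ _ S1 u A) (L2 : @side_law R _ _ _ S2 v B) (hN : (0 < N)%N) (hM : (0 < M)%N).

Definition Xv (w : T1 * T2) : R :=
  (N * M)%:R^-1 * \sum_(n < N) \sum_(m < M) h (u n w.1) (v m w.2).
Definition mu_v := avg A (fun x => avg B (h x)).
Definition cc_v := avg A (fun x => avg B (fun y => h x y ^+ 2)).
Definition b1_v := avg A (fun x => avg B (h x) ^+ 2).
Definition b2_v := avg B (fun y => avg A (fun x => h x y) ^+ 2).

Lemma E1v n m : avg (setX S1 S2) (fun w => h (u n w.1) (v m w.2)) = mu_v.
Proof.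
rewrite avg_setX /=.
rewrite (@avg_ext _ _ _ _ (fun w1 => avg B (h (u n w1)))); last first.
  by move=> w1 _; apply: etrans (side1 (h (u n w1)) m L2) _.
exact: (side1 (fun x => avg B (h x)) n L1).
Qed.

Lemma E2v n n' m m' :
  avg (setX S1 S2) (fun w => h (u n w.1) (v m w.2) * h (u n' w.1) (v m' w.2)) =
  if n == n' then (if m == m' then cc_v else b1_v)
  else (if m == m' then b2_v else mu_v ^+ 2).
Proof.
have [_ _ l1] := L1; have [_ _ l2] := L2.
rewrite avg_setX /=.
case: (m =P m') => [<-|mm].
  rewrite (@avg_ext _ _ _ _ (fun w1 => avg B (fun y => h (u n w1) y * h (u n' w1) y))); last first.
    move=> w1 _; apply: etrans (l2 (h (u n w1)) (h (u n' w1)) m m) _; by rewrite eqxx.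
  rewrite avg_exchange.
  rewrite (@avg_ext _ _ _ _ (fun y => if n == n' then avg A (fun x => h x y * h x y)
           else avg A (fun x => h x y) * avg A (fun x => h x y))); last first.
    move=> y _; exact: (l1 (fun x => h x y) (fun x => h x y) n n').
  case: (n =P n') => _.
    rewrite /cc_v avg_exchange; apply: avg_ext => y _; apply: avg_ext => x _.
    by rewrite expr2.
  by rewrite /b2_v; apply: avg_ext => y _; rewrite expr2.
rewrite (@avg_ext _ _ _ _ (fun w1 => avg B (h (u n w1)) * avg B (h (u n' w1)))); last first.
  move=> w1 _; apply: etrans (l2 (h (u n w1)) (h (u n' w1)) m m') _.
  by case: eqP.
apply: etrans (l1 (fun x => avg B (h x)) (fun x => avg B (h x)) n n') _.
case: (n =P n') => _.
  by rewrite /b1_v; apply: avg_ext => x _; rewrite expr2.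
by rewrite /mu_v expr2.
Qed.

Lemma mean_v : avg (setX S1 S2) Xv = mu_v.
Proof.
rewrite /Xv avgZ avg_sum.
under eq_bigr => n _ do rewrite avg_sum.
under eq_bigr => n _ do under eq_bigr => m _ do rewrite E1v.
rewrite sumr_const card_ord sumr_const card_ord -mulrnA -[mu_v *+ _]mulr_natr mulnC.
by rewrite mulrC mulfK // pnatr_eq0 -lt0n muln_gt0 hN hM.
Qed.

Lemma var_v : variance (setX S1 S2) Xv =
  (cc_v - b1_v - b2_v + mu_v ^+ 2) / (N * M)%:R + (b1_v - mu_v ^+ 2) / N%:R
  + (b2_v - mu_v ^+ 2) / M%:R.
Proof.
have [p1 _ _] := L1; have [p2 _ _] := L2.
rewrite var_alt ?cardsX ?muln_gt0 ?p1 ?p2 // mean_v.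
pose Y n n' m m' (w : T1 * T2) := h (u n w.1) (v m w.2) * h (u n' w.1) (v m' w.2).
rewrite (@avg_ext _ _ _ _ (fun w => (N * M)%:R^-1 ^+ 2 *
   \sum_(n < N) \sum_(n' < N) \sum_(m < M) \sum_(m' < M) Y n n' m m' w)); last first.
  move=> w _; rewrite /Xv exprMn; congr (_ * _).
  rewrite expr2 big_distrlr /=; apply: eq_bigr => n _; apply: eq_bigr => n' _.
  by rewrite big_distrlr.
rewrite avgZ avg_sum.
under eq_bigr => n _ do rewrite avg_sum.
under eq_bigr => n _ do under eq_bigr => n' _ do rewrite avg_sum.
under eq_bigr => n _ do under eq_bigr => n' _ do under eq_bigr => m _ do rewrite avg_sum.
under eq_bigr => n _ do under eq_bigr => n' _ do under eq_bigr => m _ do under eq_bigr => m' _ do rewrite /Y E2v.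
have I : forall n n' : 'I_N, \sum_(m < M) \sum_(m' < M)
    (if n == n' then (if m == m' then cc_v else b1_v) else (if m == m' then b2_v else mu_v ^+ 2)) =
    if n == n' then M%:R * cc_v + (M%:R * M%:R - M%:R) * b1_v
    else M%:R * b2_v + (M%:R * M%:R - M%:R) * mu_v ^+ 2.
  by move=> n n'; case: (n == n'); exact: sum_ifeq.
under eq_bigr => n _ do under eq_bigr => n' _ do rewrite I.
rewrite sum_ifeq natrM.
have hN' : N%:R != 0 :> R by rewrite pnatr_eq0 -lt0n.
have hM' : M%:R != 0 :> R by rewrite pnatr_eq0 -lt0n.
field.
by rewrite hN' hM'.
Qed.
End VStat.

Section Kendall.
Variable n : nat.
Implicit Types (x y t : 'S_n) (u v w : 'I_n) (b : seq 'I_n) (G : {set 'I_n}).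

Definition ltp x u v : bool := ((x^-1)%g u < (x^-1)%g v)%N.

Lemma ltp_neg x u v : u != v -> ltp x v u = ~~ ltp x u v.
Proof.
move=> huv; rewrite /ltp -leqNgt ltn_neqAle; case: eqP => //= e.
by move/val_inj/perm_inj: e => e; rewrite e eqxx in huv.
Qed.

Lemma ltpxx x u : ltp x u u = false.
Proof. by rewrite /ltp ltnn. Qed.

Definition Kd x t : nat := \sum_u \sum_v (ltp x u v && ltp t v u).

Lemma kendallE x t : kendall x t = Kd x t.
Proof.
rewrite /kendall -sum1_card big_mkcond /=.
set S := [set p : 'I_n * 'I_n | _].
transitivity (\sum_u \sum_v (if (u, v) \in S then 1%N else 0%N)).
  by rewrite pair_bigA; apply: eq_bigr => [[u v]] _.
have E : forall u v, (if (u, v) \in S then 1%N else 0%N)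
   = ((u < v)%N * ((ltp x u v && ltp t v u) + (ltp x v u && ltp t u v)))%N.
  move=> u v; rewrite inE /=.
  case: (ltnP u v) => huv /=; last by rewrite mul0n.
  have nuv : u != v by apply/eqP => e; rewrite e ltnn in huv.
  rewrite mul1n (ltp_neg x nuv) (ltp_neg t nuv) -/(ltp x u v) -/(ltp t u v).
  by case: (ltp x u v); case: (ltp t u v).
under eq_bigr => u _ do under eq_bigr => v _ do rewrite E mulnDr.
under eq_bigr => u _ do rewrite big_split /=.
rewrite big_split /= [X in (_ + X)%N]exchange_big /=.
rewrite -big_split /= /Kd; apply: eq_bigr => u _; rewrite -big_split /=; apply: eq_bigr => v _.
have [e|nuv] := eqVneq u v; first by rewrite e ltpxx /= !muln0.
rewrite -mulnDl.
have -> : ((u < v)%N + (v < u)%N)%N = 1%N.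
  by case: (ltngtP u v) => // e; move: nuv; rewrite (val_inj e) eqxx.
by rewrite mul1n.
Qed.

Lemma kendall_sym x t : kendall x t = kendall t x.
Proof.
rewrite !kendallE /Kd exchange_big; apply: eq_bigr => u _; apply: eq_bigr => v _.
by rewrite andbC.
Qed.


Lemma topk_pos b t u : (size b <= n)%N -> t \in topk b ->
  if u \in b then (t^-1)%g u = index u b :> nat else (size b <= (t^-1)%g u)%N.
Proof.
move=> hb ht; move: ht; rewrite inE => /forallP ht.
case: ifP => hu.
  have hi : (index u b < n)%N by apply: leq_trans hb; rewrite index_mem.
  have := ht (Ordinal hi); rewrite /= index_mem hu /= => /eqP e.
  rewrite nth_index // in e.
  by rewrite -{1}e permK.
rewrite leqNgt; apply/negP => hlt.
have := ht ((t^-1)%g u); rewrite hlt /= permKV => /eqP e.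
by move: hu; rewrite e mem_nth.
Qed.

Lemma topk_lt b t u v : (size b <= n)%N -> t \in topk b -> (u \in b) || (v \in b) ->
  ltp t v u = (index v b < index u b)%N.
Proof.
move=> hb ht huv; move: (topk_pos u hb ht) (topk_pos v hb ht); rewrite /ltp.
case hu: (u \in b); case hv: (v \in b) => /= pu pv.
- by rewrite pu pv.
- rewrite pu (memNindex (negbT hv)).
  have hiu : (index u b < size b)%N by rewrite index_mem hu.
  apply/idP/idP => h; first exact: leq_ltn_trans pv h.
  by have := ltn_trans h hiu; rewrite ltnn.
- rewrite pv (memNindex (negbT hu)).
  have hiv : (index v b < size b)%N by rewrite index_mem hv.
  apply/idP/idP => h //; exact: leq_trans hiv pu.
by rewrite hu hv in huv.
Qed.

Definition eb b x : nat :=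
  \sum_u \sum_v [&& (u \in b) || (v \in b), ltp x u v & (index v b < index u b)%N].
Definition Db b x t : nat :=
  \sum_u \sum_v [&& u \notin b, v \notin b, ltp x u v & ltp t v u].

Lemma Kd_split b x t : (size b <= n)%N -> t \in topk b -> Kd x t = (eb b x + Db b x t)%N.
Proof.
move=> hb ht; rewrite /Kd /eb /Db -big_split /=; apply: eq_bigr => u _.
rewrite -big_split /=; apply: eq_bigr => v _.
case hu: (u \in b); case hv: (v \in b) => /=;
  try by rewrite (topk_lt hb ht) ?hu ?hv // addn0.
by rewrite add0n.
Qed.

Lemma ltpM x p u v : ltp (x * p)%g (p u) (p v) = ltp x u v.
Proof. by rewrite /ltp invMg !permM !permK. Qed.

Lemma Db_relabel b x y (p : 'S_n) t :
  (forall w, (p w \in b) = (w \in b)) ->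
  (forall u v, u \notin b -> v \notin b -> ltp y (p u) (p v) = ltp x u v) ->
  Db b y (t * p)%g = Db b x t.
Proof.
move=> hb hl; rewrite /Db (reindex_inj (@perm_inj _ p)) /=; apply: eq_bigr => u _.
rewrite (reindex_inj (@perm_inj _ p)) /=; apply: eq_bigr => v _.
rewrite !hb ltpM.
case hu: (u \in b); case hv: (v \in b) => //=.
by rewrite hl ?hu ?hv.
Qed.

Definition rk x G u : nat := #|[set w in G | ltp x w u]|.

Lemma rk_lt x G u v : u \in G -> v \in G -> ltp x u v -> (rk x G u < rk x G v)%N.
Proof.
move=> hu hv huv; apply: proper_card; apply/properP; split.
  apply/subsetP => w; rewrite !inE => /andP [-> hw] /=.
  move: hw huv; rewrite /ltp; exact: ltn_trans.
by exists u; rewrite !inE ?hu ?huv ?ltpxx.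
Qed.

Lemma rk_bound x G u : u \in G -> (rk x G u < #|G|)%N.
Proof.
move=> hu; apply: proper_card; apply/properP; split.
  by apply/subsetP => w; rewrite !inE => /andP [].
by exists u; rewrite ?inE ?hu ?ltpxx.
Qed.

Lemma rk_ltE x G u v : u \in G -> v \in G -> ltp x u v = (rk x G u < rk x G v)%N.
Proof.
move=> hu hv; apply/idP/idP; first exact: rk_lt.
have [e|nuv] := eqVneq u v; first by rewrite e ltnn.
move=> h; case hn: (ltp x u v) => //.
have : ltp x v u by rewrite (ltp_neg x nuv) hn.
move/(rk_lt hv hu) => h2; by have := ltn_trans h h2; rewrite ltnn.
Qed.

Lemma rk_inj x G u v : u \in G -> v \in G -> rk x G u = rk x G v -> u = v.
Proof.
move=> hu hv e; have [//|nuv] := eqVneq u v.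
case h: (ltp x u v).
  by have := rk_lt hu hv h; rewrite e ltnn.
have : ltp x v u by rewrite (ltp_neg x nuv) h.
by move/(rk_lt hv hu); rewrite e ltnn.
Qed.

Lemma rk_surj x G k : (k < #|G|)%N -> exists2 w, w \in G & rk x G w = k.
Proof.
move=> hk.
have hGn : (#|G| <= n)%N by rewrite -[X in (_ <= X)%N](card_ord n) max_card.
pose I := [set (inord (rk x G w) : 'I_n.+1) | w in G].
pose J := [set (inord (val i) : 'I_n.+1) | i : 'I_#|G|].
have cI : #|I| = #|G|.
  apply: card_in_imset => w1 w2 h1 h2 /(congr1 (@nat_of_ord _)).
  rewrite !inordK; first exact: rk_inj.
    by apply: leq_trans (rk_bound x h2) _; exact: leq_trans hGn (leqnSn n).
  by apply: leq_trans (rk_bound x h1) _; exact: leq_trans hGn (leqnSn n).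
have cJ : #|J| = #|G|.
  rewrite card_imset ?card_ord // => i j /(congr1 (@nat_of_ord _)).
  rewrite !inordK; first exact: val_inj.
    by apply: leq_trans (ltn_ord j) _; exact: leq_trans hGn (leqnSn n).
  by apply: leq_trans (ltn_ord i) _; exact: leq_trans hGn (leqnSn n).
have IJ : I \subset J.
  apply/subsetP => i /imsetP [w hw ->]; apply/imsetP.
  by exists (Ordinal (rk_bound x hw)).
have /eqP EIJ : I == J by rewrite eqEcard IJ cI cJ leqnn.
have : (inord k : 'I_n.+1) \in J by apply/imsetP; exists (Ordinal hk).
rewrite -EIJ => /imsetP [w hw /(congr1 (@nat_of_ord _))].
rewrite !inordK; first by move=> e; exists w.
  by apply: leq_trans (rk_bound x hw) _; exact: leq_trans hGn (leqnSn n).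
by apply: leq_trans hk _; exact: leq_trans hGn (leqnSn n).
Qed.

Lemma relabel_exists b x y : exists p : 'S_n,
  (forall w, w \in b -> p w = w) /\
  (forall u v, u \notin b -> v \notin b -> ltp y (p u) (p v) = ltp x u v).
Proof.
pose G := [set w | w \notin b].
pose f u := if u \in G then odflt u [pick w in G | rk y G w == rk x G u] else u.
have fP : forall u, u \in G -> f u \in G /\ rk y G (f u) = rk x G u.
  move=> u hu; rewrite /f hu; case: pickP => [w /andP [hw /eqP e] | hnone] //=.
  have [w hw e] := rk_surj y (rk_bound x hu).
  by have := hnone w; rewrite hw e eqxx.
have finj : injective f.
  move=> u1 u2; case h1: (u1 \in G); case h2: (u2 \in G).
  - move=> e; have [_ e1] := fP _ h1; have [_ e2] := fP _ h2.
    by apply: (rk_inj (x:=x) h1 h2); rewrite -e1 -e2 e.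
  - have [g1 _] := fP _ h1; rewrite {2}/f h2 => e.
    by rewrite e h2 in g1.
  - have [g2 _] := fP _ h2; rewrite {1}/f h1 => e.
    by rewrite -e h1 in g2.
  - by rewrite /f h1 h2.
exists (perm finj); split.
  by move=> w hw; rewrite permE /f inE hw.
move=> u v hu hv.
have hu' : u \in G by rewrite inE.
have hv' : v \in G by rewrite inE.
have [gu eu] := fP _ hu'; have [gv ev] := fP _ hv'.
by rewrite !permE (rk_ltE y gu gv) eu ev -rk_ltE.
Qed.
End Kendall.

Section Anti.
Variable n : nat.
Implicit Types (x y s t : 'S_n) (u v w : 'I_n) (a b : seq 'I_n).

Lemma anti_permE k (i : 'I_n) : (anti_perm k n i : nat) = anti_idx k n i.
Proof. by rewrite /anti_perm permE. Qed.

Lemma anti_permV k (i : 'I_n) : ((anti_perm k n)^-1)%g i = anti_perm k n i.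
Proof.
apply: (@perm_inj _ (anti_perm k n)); rewrite permKV; apply: val_inj => /=.
by rewrite !anti_permE anti_idx_invol // -anti_permE.
Qed.

Lemma ltp_anti a s u v :
  ltp (antithetic a s) u v = (anti_idx (size a) n ((s^-1)%g u) < anti_idx (size a) n ((s^-1)%g v))%N.
Proof. by rewrite /ltp /antithetic invMg !permM !anti_permV !anti_permE. Qed.

Lemma topk_anti a s : (antithetic a s \in topk a) = (s \in topk a).
Proof.
rewrite !inE; apply: eq_forallb => i /=; rewrite /antithetic permM.
case hi: (i < size a)%N => //=.
have -> : anti_perm (size a) n i = i by apply: val_inj => /=; rewrite anti_permE /anti_idx hi.
by [].
Qed.

Lemma anti_pair a s u v : (size a <= n)%N -> s \in topk a ->
  (ltp s u v + ltp (antithetic a s) u v)%N =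
  if (u \in a) || (v \in a) then ((index u a < index v a)%N * 2)%N else (u != v : nat).
Proof.
move=> ha hs; rewrite ltp_anti.
have pu := topk_pos u ha hs; have pv := topk_pos v ha hs.
have hP := ltn_ord ((s^-1)%g u); have hQ := ltn_ord ((s^-1)%g v).
set P := nat_of_ord ((s^-1)%g u) in pu hP *; set Q := nat_of_ord ((s^-1)%g v) in pv hQ *.
have ltPQ : ltp s u v = (P < Q)%N by [].
rewrite ltPQ /anti_idx.
case huv: ((u \in a) || (v \in a)).
  have E : (P < Q)%N = (index u a < index v a)%N.
    have := topk_lt (u:=v) (v:=u) ha hs; rewrite orbC => /(_ huv).
    by rewrite /ltp.
  rewrite -E.
  have hk : (P < size a)%N || (Q < size a)%N.
    case/orP: huv => h; [move: pu; rewrite h => ->|move: pv; rewrite h => ->];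
      rewrite index_mem h ?orbT //.
  case: (ltnP P (size a)) => hPa; case: (ltnP Q (size a)) => hQa //=;
    rewrite ?hPa ?hQa /= in hk *; case: (ltngtP P Q); lia.
move/negbT: huv; rewrite negb_or /= => /andP [hu hv].
move: pu pv; rewrite (negbTE hu) (negbTE hv) => pu pv.
have ePQ : (P == Q) = (u == v).
  apply/eqP/eqP => e; last by rewrite /P /Q e.
  apply: (@perm_inj _ (s^-1)%g); exact: val_inj.
rewrite -ePQ.
have -> : (P < size a)%N = false by apply/negbTE; rewrite -leqNgt.
have -> : (Q < size a)%N = false by apply/negbTE; rewrite -leqNgt.
case: (ltngtP P Q) => h; rewrite ?h /=; try lia.
Qed.

Definition eb_w b (u v : 'I_n) : nat := (((u \in b) || (v \in b)) && (index v b < index u b)%N).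

Lemma eb_alt b x : eb b x = \sum_u \sum_v (eb_w b u v * ltp x u v)%N.
Proof.
rewrite /eb; apply: eq_bigr => u _; apply: eq_bigr => v _.
rewrite /eb_w; by case: (_ || _); case: (ltp x u v); case: (_ < _)%N.
Qed.

Lemma eb_anti a b s s' : (size a <= n)%N -> s \in topk a -> s' \in topk a ->
  (eb b s + eb b (antithetic a s) = eb b s' + eb b (antithetic a s'))%N.
Proof.
move=> ha hs hs'; rewrite !eb_alt -!big_split /=; apply: eq_bigr => u _.
rewrite -!big_split /=; apply: eq_bigr => v _.
by rewrite -!mulnDr !anti_pair.
Qed.

End Anti.

Section Core.
Local Open Scope ring_scope.
Variables (R : rcfType) (q : R) (hq0 : 0 < q) (hq1 : q < 1) (n : nat).
Implicit Types (x y s t : 'S_n) (a b : seq 'I_n).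

Definition Wb b x : R := \sum_(t in topk b) q ^+ Db b x t.

Lemma topk_relabel b (p : 'S_n) t : (forall w, w \in b -> p w = w) ->
  ((t * p)%g \in topk b) = (t \in topk b).
Proof.
move=> hp; rewrite !inE; apply: eq_forallb => i /=; rewrite permM.
case hi: (i < size b)%N => //=.
have hn : p (nth i b i) = nth i b i by apply: hp; rewrite mem_nth.
by rewrite -{1}hn (inj_eq (@perm_inj _ p)).
Qed.

Lemma Wb_const b x y : Wb b x = Wb b y.
Proof.
have [p [hp hl]] := relabel_exists b x y.
have hb : forall w, (p w \in b) = (w \in b).
  move=> w; case hw: (w \in b); first by rewrite hp.
  apply/negbTE/negP => hpw; have := hp _ hpw => /perm_inj e.
  by rewrite e in hpw; rewrite hpw in hw.
rewrite /Wb [RHS](reindex_inj (mulIg p)) /=; apply: eq_big => t.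
  by rewrite topk_relabel.
by move=> _; rewrite (Db_relabel _ hb hl).
Qed.

Lemma Fb_closed b x : (size b <= n)%N ->
  avg (topk b) (mallows q x) = q ^+ eb b x * (Wb b 1%g / #|topk b|%:R).
Proof.
move=> hb; rewrite /avg /mallows.
under eq_bigr => t ht do rewrite kendallE (Kd_split x hb ht) exprD.
by rewrite -mulr_sumr -(Wb_const b x 1%g) mulrA.
Qed.

Lemma avg_antiK a (phi : 'S_n -> R) :
  avg (topk a) (fun x => phi (antithetic a x)) = avg (topk a) phi.
Proof.
rewrite /avg; congr (_ / _).
rewrite [RHS](reindex_inj (mulgI (anti_perm (size a) n))) /=.
by apply: eq_bigl => x; rewrite -topk_anti.
Qed.

Lemma core_cov a b : (size a <= n)%N -> (size b <= n)%N ->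
  avg (topk a) (fun x => avg (topk b) (mallows q x) * avg (topk b) (mallows q (antithetic a x)))
  <= avg (topk a) (fun x => avg (topk b) (mallows q x)) ^+ 2.
Proof.
move=> ha hb; rewrite expr2.
rewrite -{2}(avg_antiK a (fun x => avg (topk b) (mallows q x))).
apply: (avg_cov (g1 := fun x => avg (topk b) (mallows q x))
                (g2 := fun x => avg (topk b) (mallows q (antithetic a x)))) => x y hx hy.
rewrite !Fb_closed //.
set k := Wb b 1%g / _.
have hk : 0 <= k by rewrite divr_ge0 // sumr_ge0 // => t _; rewrite exprn_ge0 // ltW.
have E := eb_anti b ha hx hy.
set ex := eb b x in E *; set ey := eb b y in E *.
set ax := eb b (antithetic a x) in E *; set ay := eb b (antithetic a y) in E *.
have key : (q ^+ ex - q ^+ ey) * (q ^+ ax - q ^+ ay) <= 0.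
  have q0 : 0 <= q by exact: ltW.
  have q1 : q <= 1 by exact: ltW.
  case: (leqP ex ey) => h.
    have h2 : (ay <= ax)%N by lia.
    apply: mulr_ge0_le0; first by rewrite subr_ge0; exact: ler_wiXn2l.
    by rewrite subr_le0; exact: ler_wiXn2l.
  have h2 : (ax <= ay)%N by lia.
  rewrite -mulrNN; apply: mulr_ge0_le0.
    by rewrite opprB subr_ge0; apply: ler_wiXn2l => //; exact: ltnW.
  by rewrite opprB subr_le0; exact: ler_wiXn2l.
have -> : (q ^+ ex * k - q ^+ ey * k) * (q ^+ ax * k - q ^+ ay * k) =
   k ^+ 2 * ((q ^+ ex - q ^+ ey) * (q ^+ ax - q ^+ ay)) by ring.
apply: mulr_ge0_le0 => //; exact: exprn_ge0.
Qed.

End Core.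

Section Gen.
Local Open Scope ring_scope.
Variable R : rcfType.

Lemma variance_ext (T : finType) (A : {set T}) (X Y : T -> R) :
  {in A, X =1 Y} -> variance A X = variance A Y.
Proof.
move=> h; rewrite /variance (avg_ext h); apply: avg_ext => w hw; by rewrite h.
Qed.

Lemma avgX1 (T : finType) (B : {set T}) (phi : T -> R) : (0 < #|B|)%N ->
  avg (setX B B) (fun y => phi y.1) = avg B phi.
Proof. move=> hB; rewrite avg_setX; apply: avg_ext => x _ /=; exact: avg_cst. Qed.

Lemma avgX2 (T : finType) (B : {set T}) (phi : T -> R) : (0 < #|B|)%N ->
  avg (setX B B) (fun y => phi y.2) = avg B phi.
Proof. by move=> hB; rewrite avg_setX /= avg_cst. Qed.

Lemma gen_mean (T : finType) (KA : {set T}) (F : T -> R) (Ant : T -> T) :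
  (forall phi : T -> R, avg KA (fun x => phi (Ant x)) = avg KA phi) -> (0 < #|KA|)%N ->
  avg KA (fun x => (F x + F (Ant x)) / 2) = avg KA F /\
  avg (setX KA KA) (fun x => (F x.1 + F x.2) / 2) = avg KA F.
Proof.
move=> hK hp; split.
  by rewrite avgZr avgD hK; (field; done).
by rewrite avgZr avgD avgX1 // avgX2 //; (field; done).
Qed.

Lemma gen_b (T : finType) (KA : {set T}) (F : T -> R) (Ant : T -> T) :
  (forall phi : T -> R, avg KA (fun x => phi (Ant x)) = avg KA phi) -> (0 < #|KA|)%N ->
  avg KA (fun x => F x * F (Ant x)) <= avg KA F ^+ 2 ->
  avg KA (fun x => ((F x + F (Ant x)) / 2) ^+ 2) <=
  avg (setX KA KA) (fun x => ((F x.1 + F x.2) / 2) ^+ 2).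
Proof.
move=> hK hp hc.
have eA : avg KA (fun x => ((F x + F (Ant x)) / 2) ^+ 2) =
   (2 * avg KA (fun x => F x ^+ 2) + 2 * avg KA (fun x => F x * F (Ant x))) / 4.
  rewrite (avg_ext (Y := fun x => ((F x ^+ 2 + 2 * (F x * F (Ant x))) + F (Ant x) ^+ 2) / 4)); last first.
    by move=> x _; (field; done).
  rewrite avgZr !avgD avgZ (hK (fun x => F x ^+ 2)); (field; done).
have eI : avg (setX KA KA) (fun x => ((F x.1 + F x.2) / 2) ^+ 2) =
   (2 * avg KA (fun x => F x ^+ 2) + 2 * avg KA F ^+ 2) / 4.
  rewrite avg_setX.
  rewrite (avg_ext (Y := fun x => ((F x ^+ 2 + 2 * (F x * avg KA F)) + avg KA (fun y => F y ^+ 2)) / 4)); last first.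
    move=> x _ /=.
    rewrite (avg_ext (Y := fun y => ((F x ^+ 2 + 2 * (F x * F y)) + F y ^+ 2) / 4)); last first.
      by move=> y _; (field; done).
    by rewrite avgZr !avgD avg_cst // !avgZ.
  rewrite avgZr !avgD avg_cst // avgZ avgZr; (field; done).
rewrite eA eI ler_pM2r ?invr_gt0 ?ltr0n // lerD2l ler_pM2l ?ltr0n //.
Qed.
End Gen.

Section Main.
Local Open Scope ring_scope.
Variables (R : rcfType) (q : R) (hq0 : 0 < q) (hq1 : q < 1) (n : nat) (a b : seq 'I_n).

Definition hA (x y : 'S_n) : R :=
  (mallows q x y + mallows q (antithetic a x) y + mallows q x (antithetic b y)
   + mallows q (antithetic a x) (antithetic b y)) / 4.
Definition hI (x y : 'S_n * 'S_n) : R :=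
  (mallows q x.1 y.1 + mallows q x.2 y.1 + mallows q x.1 y.2 + mallows q x.2 y.2) / 4.

Lemma est_eq N M (F : 'I_N -> 'I_M -> R) :
  (4 * N * M)%:R^-1 * \sum_i \sum_j F i j = (N * M)%:R^-1 * \sum_i \sum_j (F i j / 4).
Proof.
under [in RHS]eq_bigr => i _ do rewrite -mulr_suml.
rewrite -mulr_suml -mulnA natrM invfM; ring.
Qed.

Lemma XA_eq N M w : X_anti q a b (N:=N) (M:=M) w =
  Xv (fun i (f : {ffun 'I_N -> 'S_n}) => f i) (fun j (g : {ffun 'I_M -> 'S_n}) => g j) hA w.
Proof.
rewrite /X_anti /estimator est_eq /Xv; congr (_ * _).
by apply: eq_bigr => i _; apply: eq_bigr => j _; rewrite !ffunE.
Qed.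

Lemma XI_eq N M w : @X_iid R q n N M w =
  Xv (fun i (f : {ffun 'I_N -> 'S_n} * {ffun 'I_N -> 'S_n}) => (f.1 i, f.2 i))
     (fun j (g : {ffun 'I_M -> 'S_n} * {ffun 'I_M -> 'S_n}) => (g.1 j, g.2 j)) hI w.
Proof. by rewrite /X_iid /estimator est_eq /Xv. Qed.

Lemma mallows_sym (x y : 'S_n) : mallows q x y = mallows q y x.
Proof. by rewrite /mallows kendall_sym. Qed.

End Main.

Local Open Scope ring_scope.
Lemma samples_card0 (R : rcfType) m (A : {set 'S_m}) N :
  (0 < N)%N -> #|A| = 0%N -> #|samples N A| = 0%N.
Proof.
move=> hN hA; have := card_samples R A N; rewrite hA expr0n.
case: N hN => // N _ /= /eqP; by rewrite pnatr_eq0 => /eqP.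
Qed.

Unset Implicit Arguments.
Theorem theorem5 (R : rcfType) (q : R) (hq0 : 0 < q) (hq1 : q < 1)
    (n : nat) (a b : seq 'I_n) (ha : uniq a) (hb : uniq b) :
  (forall N M : nat, (0 < N)%N -> (0 < M)%N ->
     mean_anti q a b N M = mean_iid q a b N M) /\
  exists C : R, forall N M : nat, (0 < N)%N -> (0 < M)%N ->
     V_anti q a b N M <= V_iid q a b N M + C / (N * M)%:R.
Proof.
have sa : (size a <= n)%N by rewrite -(card_uniqP ha); apply: leq_trans (max_card _) _; rewrite card_ord.
have sb : (size b <= n)%N by rewrite -(card_uniqP hb); apply: leq_trans (max_card _) _; rewrite card_ord.
case hpos: ((0 < #|topk a|)%N && (0 < #|topk b|)%N); last first.
  have E0 : forall N M, (0 < N)%N -> (0 < M)%N ->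
      #|Omega_anti a b N M| = 0%N /\ #|Omega_iid a b N M| = 0%N.
    move=> N M hN hM; move/negbT: hpos; rewrite negb_and -!eqn0Ngt => /orP [/eqP h|/eqP h];
      rewrite /Omega_anti /Omega_iid !cardsX ?(samples_card0 R hN h) ?(samples_card0 R hM h) ?muln0 //.
  split.
    move=> N M hN hM; have [h1 h2] := E0 N M hN hM.
    by rewrite /mean_anti /mean_iid !avg_card0.
  exists 0 => N M hN hM; have [h1 h2] := E0 N M hN hM.
  by rewrite /V_anti /V_iid /variance !avg_card0 // mul0r addr0.
move/andP: hpos => [pA pB].
pose f x := avg (topk b) (mallows q x).
pose g y := avg (topk a) (mallows q y).
have hKa : forall phi : 'S_n -> R, avg (topk a) (fun x => phi (antithetic a x)) = avg (topk a) phi.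
  by move=> phi; exact: avg_antiK.
have hKb : forall phi : 'S_n -> R, avg (topk b) (fun x => phi (antithetic b x)) = avg (topk b) phi.
  by move=> phi; exact: avg_antiK.
have hAB : forall x, avg (topk b) (hA q a b x) = (f x + f (antithetic a x)) / 2.
  move=> x; rewrite /hA avgZr !avgD (hKb (mallows q x)) (hKb (mallows q (antithetic a x))).
  rewrite /f; field; done.
have hAA : forall y, avg (topk a) (fun x => hA q a b x y) = (g y + g (antithetic b y)) / 2.
  move=> y; rewrite (avg_ext (Y := fun x => (mallows q y x + mallows q y (antithetic a x)
     + mallows q (antithetic b y) x + mallows q (antithetic b y) (antithetic a x)) / 4)); last first.
    by move=> x _; rewrite /hA !(mallows_sym q x) !(mallows_sym q (antithetic a x)).
  rewrite avgZr !avgD (hKa (mallows q y)) (hKa (mallows q (antithetic b y))).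
  rewrite /g; field; done.
have hIB : forall x, avg (setX (topk b) (topk b)) (hI q x) = (f x.1 + f x.2) / 2.
  move=> x; rewrite /hI avgZr !avgD (avgX1 (mallows q x.1) pB) (avgX1 (mallows q x.2) pB).
  rewrite (avgX2 (mallows q x.1) pB) (avgX2 (mallows q x.2) pB).
  rewrite /f; field; done.
have hIA : forall y, avg (setX (topk a) (topk a)) (fun x => hI q x y) = (g y.1 + g y.2) / 2.
  move=> y; rewrite (avg_ext (Y := fun x => (mallows q y.1 x.1 + mallows q y.1 x.2
     + mallows q y.2 x.1 + mallows q y.2 x.2) / 4)); last first.
    by move=> x _; rewrite /hI !(mallows_sym q x.1) !(mallows_sym q x.2).
  rewrite avgZr !avgD (avgX1 (mallows q y.1) pA) (avgX2 (mallows q y.1) pA).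
  rewrite (avgX1 (mallows q y.2) pA) (avgX2 (mallows q y.2) pA).
  rewrite /g; field; done.
have muA : mu_v (topk a) (topk b) (hA q a b) = avg (topk a) f.
  rewrite /mu_v (avg_ext (Y := fun x => (f x + f (antithetic a x)) / 2)); last by move=> x _; exact: hAB.
  exact: (gen_mean f hKa pA).1.
have muI : mu_v (setX (topk a) (topk a)) (setX (topk b) (topk b)) (@hI R q n) = avg (topk a) f.
  rewrite /mu_v (avg_ext (Y := fun x => (f x.1 + f x.2) / 2)); last by move=> x _; exact: hIB.
  exact: (gen_mean f hKa pA).2.
have b1le : b1_v (topk a) (topk b) (hA q a b) <=
            b1_v (setX (topk a) (topk a)) (setX (topk b) (topk b)) (@hI R q n).
  rewrite /b1_v (avg_ext (Y := fun x => ((f x + f (antithetic a x)) / 2) ^+ 2)); last first.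
    by move=> x _; rewrite hAB.
  rewrite [X in _ <= X](avg_ext (Y := fun x => ((f x.1 + f x.2) / 2) ^+ 2)); last first.
    by move=> x _; rewrite hIB.
  apply: gen_b => //; exact: core_cov.
have b2le : b2_v (topk a) (topk b) (hA q a b) <=
            b2_v (setX (topk a) (topk a)) (setX (topk b) (topk b)) (@hI R q n).
  rewrite /b2_v (avg_ext (Y := fun y => ((g y + g (antithetic b y)) / 2) ^+ 2)); last first.
    by move=> y _; rewrite hAA.
  rewrite [X in _ <= X](avg_ext (Y := fun y => ((g y.1 + g y.2) / 2) ^+ 2)); last first.
    by move=> y _; rewrite hIA.
  apply: gen_b => //; exact: core_cov.
split.
  move=> N M hN hM; rewrite /mean_anti /mean_iid.
  rewrite (avg_ext (fun w (_ : w \in Omega_anti a b N M) => XA_eq q a b w)) (avg_ext (fun w (_ : w \in Omega_iid a b N M) => XI_eq q w)).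
  rewrite (mean_v (hA q a b) (side_samples R N pA) (side_samples R M pB) hN hM).
  rewrite (mean_v (@hI R q n) (side_pairs R N pA) (side_pairs R M pB) hN hM).
  by rewrite muA muI.
pose cA := cc_v (topk a) (topk b) (hA q a b).
pose cI := cc_v (setX (topk a) (topk a)) (setX (topk b) (topk b)) (@hI R q n).
exists ((cA - b1_v (topk a) (topk b) (hA q a b) - b2_v (topk a) (topk b) (hA q a b))
      - (cI - b1_v (setX (topk a) (topk a)) (setX (topk b) (topk b)) (@hI R q n)
            - b2_v (setX (topk a) (topk a)) (setX (topk b) (topk b)) (@hI R q n))).
move=> N M hN hM; rewrite /V_anti /V_iid.
rewrite (variance_ext (fun w (_ : w \in Omega_anti a b N M) => XA_eq q a b w)) (variance_ext (fun w (_ : w \in Omega_iid a b N M) => XI_eq q w)).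
rewrite (var_v (hA q a b) (side_samples R N pA) (side_samples R M pB) hN hM).
rewrite (var_v (@hI R q n) (side_pairs R N pA) (side_pairs R M pB) hN hM).
rewrite muA muI -/cA -/cI.
move: b1le b2le.
set B1A := b1_v _ _ (hA q a b). set B2A := b2_v _ _ (hA q a b).
set B1I := b1_v _ _ (@hI R q n). set B2I := b2_v _ _ (@hI R q n).
set m := avg (topk a) f.
move=> h1 h2; rewrite -subr_ge0.
set NM := (N * M)%:R. set Nr := N%:R. set Mr := M%:R.
have -> : (cI - B1I - B2I + m ^+ 2) / NM + (B1I - m ^+ 2) / Nr + (B2I - m ^+ 2) / Mr +
     (cA - B1A - B2A - (cI - B1I - B2I)) / NM -
     ((cA - B1A - B2A + m ^+ 2) / NM + (B1A - m ^+ 2) / Nr + (B2A - m ^+ 2) / Mr) =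
     (B1I - B1A) / Nr + (B2I - B2A) / Mr by ring.
by apply: addr_ge0; apply: divr_ge0; rewrite ?subr_ge0 ?ler0n.
Qed.
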